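(* Let $\Sigma\subseteq\mathcal L$ be closed under subformulas and let $\mathcal W=(W,\le,\ell,R)$ be a $\Sigma$-labelled system whose relation $R$ is $\omega$-sensible. Then the relation $R^+_{\mathcal Q}$ of its quotient $\mathcal Q=(W/{\sim},\le_{\mathcal Q},\ell_{\mathcal Q},R^+_{\mathcal Q})$ is $\omega$-sensible; hence $\mathcal Q$ is a $\Sigma$-quasimodel.
   Context: $\mathcal L$: formulas over propositional variables with $\wedge,\vee,\Rightarrow,\Leftarrow$ (co-implication), $\mathsf X,\mathsf Y,\mathsf G,\mathsf H,\mathsf U,\mathsf S$. Let $\Sigma\subseteq\mathcal L$ be closed under subformulas. A $\Sigma$-type is $\Phi\subseteq\Sigma$ such that: for $\varphi\wedge\psi\in\Sigma$, $\varphi\wedge\psi\in\Phi$ iff $\varphi,\psi\in\Phi$; for $\varphi\vee\psi\in\Sigma$, $\varphi\vee\psi\in\Phi$ iff $\varphi\in\Phi$ or $\psi\in\Phi$; for $\varphi\Rightarrow\psi\in\Sigma$, ($\varphi\Rightarrow\psi\in\Phi$ implies $\varphi\notin\Phi$ or $\psi\in\Phi$) and ($\psi\in\Phi$ implies $\varphi\Rightarrow\psi\in\Phi$); for $\varphi\Leftarrow\psi\in\Sigma$, ($\varphi\Leftarrow\psi\in\Phi$ implies $\varphi\in\Phi$) and ($\varphi\in\Phi,\psi\notin\Phi$ implies $\varphi\Leftarrow\psi\in\Phi$). A poset is locally linear if it is a disjoint union of linear posets; write $a\lessgtr b$ if $a\le b$ or $b\le a$. A $\Sigma$-labelled space is $(W,\le,\ell)$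 with $(W,\le)$ locally linear, $\ell\colon W\to$ $\Sigma$-types, $w\le v\Rightarrow\ell(w)\supseteq\ell(v)$, such that whenever $\varphi\Rightarrow\psi\in\Sigma\setminus\ell(w)$ there is $v\le w$ with $\varphi\in\ell(v)$, $\psi\notin\ell(v)$, and whenever $\varphi\Leftarrow\psi\in\ell(w)$ there is $v\ge w$ with $\varphi\in\ell(v)$, $\psi\notin\ell(v)$. A relation $R\subseteq W\times W$ is convex if every image set and every preimage set of a point is convex in $\le$; fully confluent if (forth–down) $x\le x'Ry'$ implies $xRy\le y'$ for some $y$; (forth–up) $x'\ge xRy$ implies $x'Ry'\ge y$ for some $y'$; (back–down) $x'Ry'\ge y$ implies $x'\ge xRy$ for some $x$; (back–up) $xRy\le y'$ implies $x\le x'Ry'$ for some $x'$; bi-serial if every point has an $R$-successor and an $R$-predecessor. A pair $(\Phi,\Psi)$ of $\Sigma$-types is sensible if for formulas in $\Sigma$: $\mathsf X\varphi\in\Phi\iff\varphi\in\Psi$; $\mathsf Y\varphi\in\Psi\iff\varphi\in\Phi$; $\mathsf G\varphi\in\Phi\iff(\varphi\in\Phi\wedge\mathsf G\varphi\in\Psi)$; $\mathsf H\varphi\in\Psi\iff(\varphi\in\Psi\wedge\mathsf H\varphi\in\Phi)$; $\varphi\,\mathsf U\,\psi\in\Phi\iff(\psi\in\Phi$ or ($\varphi\in\Phi$ and $\varphi\,\mathsf U\,\psi\in\Psi$)); $\varphi\,\mathsf S\,\psi\in\Psi\iff(\psi\in\Psi$ or ($\varphi\in\Psi$ and $\varphi\,\mathsf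 S\,\psi\in\Phi$)). $R$ is sensible if $wRv$ implies $(\ell(w),\ell(v))$ sensible. $R$ is $\omega$-sensible if: $\mathsf G\varphi\in\Sigma\setminus\ell(w)$ implies some $v$ with $wR^nv$ ($n\ge0$) and $\varphi\notin\ell(v)$; $\mathsf H\varphi\in\Sigma\setminus\ell(w)$ implies some $v$ with $vR^nw$ and $\varphi\notin\ell(v)$; $\varphi\,\mathsf U\,\psi\in\ell(w)$ implies some $v$ with $wR^nv$ and $\psi\in\ell(v)$; $\varphi\,\mathsf S\,\psi\in\ell(w)$ implies some $v$ with $vR^nw$ and $\psi\in\ell(v)$. A $\Sigma$-labelled system is a $\Sigma$-labelled space with a bi-serial, fully confluent, convex, sensible relation; a $\Sigma$-quasimodel is a $\Sigma$-labelled system whose relation is $\omega$-sensible. Quotient: $L(w)=\{\ell(v): v\lessgtr w\}$; $w\sim v$ iff $\ell(w)=\ell(v)$ and $L(w)=L(v)$; $[w]\le_{\mathcal Q}[v]$ iff $L(w)=L(v)$ and $\ell(w)\supseteq\ell(v)$; $\ell_{\mathcal Q}([w])=\ell(w)$; $R_{\mathcal Q}$ is the smallest relation with $wRv\Rightarrow[w]R_{\mathcal Q}[v]$; $XR^+_{\mathcal Q}Y$ iff there are $X_1\le_{\mathcal Q}X\le_{\mathcal Q}X_2$, $Y_1\le_{\mathcal Q}Y\le_{\mathcal Q}Y_2$ with $X_2R_{\mathcal Q}Y_1$ and $X_1R_{\mathcal Q}Y_2$. *)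

(* Defs.v *)
From Stdlib Require Import Arith.

Set Implicit Arguments.

Inductive form : Type :=
| Var : nat -> form
| And : form -> form -> form
| Or : form -> form -> form
| Imp : form -> form -> form
| Coimp : form -> form -> form
| Next : form -> form
| Prev : form -> form
| Glob : form -> form
| Hist : form -> form
| Until : form -> form -> form
| Since : form -> form -> form.

Definition fset := form -> Prop.

Definition subformula_closed (Sigma : fset) : Prop :=
  (forall a b, Sigma (And a b) -> Sigma a /\ Sigma b) /\
  (forall a b, Sigma (Or a b) -> Sigma a /\ Sigma b) /\
  (forall a b, Sigma (Imp a b) -> Sigma a /\ Sigma b) /\
  (forall a b, Sigma (Coimp a b) -> Sigma a /\ Sigma b) /\
  (forall a, Sigma (Next a) -> Sigma a) /\
  (forall a, Sigma (Prev a) -> Sigma a) /\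
  (forall a, Sigma (Glob a) -> Sigma a) /\
  (forall a, Sigma (Hist a) -> Sigma a) /\
  (forall a b, Sigma (Until a b) -> Sigma a /\ Sigma b) /\
  (forall a b, Sigma (Since a b) -> Sigma a /\ Sigma b).

Definition sigma_type (Sigma : fset) (Phi : fset) : Prop :=
  (forall a, Phi a -> Sigma a) /\
  (forall a b, Sigma (And a b) -> (Phi (And a b) <-> Phi a /\ Phi b)) /\
  (forall a b, Sigma (Or a b) -> (Phi (Or a b) <-> Phi a \/ Phi b)) /\
  (forall a b, Sigma (Imp a b) ->
     (Phi (Imp a b) -> ~ Phi a \/ Phi b) /\ (Phi b -> Phi (Imp a b))) /\
  (forall a b, Sigma (Coimp a b) ->
     (Phi (Coimp a b) -> Phi a) /\ (Phi a -> ~ Phi b -> Phi (Coimp a b))).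

Definition partial_order (W : Type) (le : W -> W -> Prop) : Prop :=
  (forall x, le x x) /\
  (forall x y, le x y -> le y x -> x = y) /\
  (forall x y z, le x y -> le y z -> le x z).

(** Locally linear: a disjoint union of linear posets, i.e. there is a
    partition of W (an equivalence relation E) such that each block is
    linearly ordered and elements of distinct blocks are incomparable. *)
Definition locally_linear (W : Type) (le : W -> W -> Prop) : Prop :=
  partial_order le /\
  exists E : W -> W -> Prop,
    (forall x, E x x) /\ (forall x y, E x y -> E y x) /\
    (forall x y z, E x y -> E y z -> E x z) /\
    (forall x y, E x y -> le x y \/ le y x) /\
    (forall x y, le x y -> E x y).

Definition comparable (W : Type) (le : W -> W -> Prop) (a b : W) : Prop :=
  le a b \/ le b a.

Definition labelled_space (Sigma : fset) (W : Type) (le : W -> W -> Prop)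
  (lab : W -> fset) : Prop :=
  locally_linear le /\
  (forall w, sigma_type Sigma (lab w)) /\
  (forall w v, le w v -> forall a, lab v a -> lab w a) /\
  (forall w a b, Sigma (Imp a b) -> ~ lab w (Imp a b) ->
     exists v, le v w /\ lab v a /\ ~ lab v b) /\
  (forall w a b, lab w (Coimp a b) ->
     exists v, le w v /\ lab v a /\ ~ lab v b).

Definition convex_set (W : Type) (le : W -> W -> Prop) (A : W -> Prop) : Prop :=
  forall x y z, A x -> A z -> le x y -> le y z -> A y.

Definition convex_rel (W : Type) (le R : W -> W -> Prop) : Prop :=
  (forall w, convex_set le (fun v => R w v)) /\
  (forall w, convex_set le (fun v => R v w)).

Definition fully_confluent (W : Type) (le R : W -> W -> Prop) : Prop :=
  (forall x x' y', le x x' -> R x' y' -> exists y, R x y /\ le y y') /\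
  (forall x x' y, le x x' -> R x y -> exists y', R x' y' /\ le y y') /\
  (forall x' y' y, R x' y' -> le y y' -> exists x, le x x' /\ R x y) /\
  (forall x y y', R x y -> le y y' -> exists x', le x x' /\ R x' y').

Definition bi_serial (W : Type) (R : W -> W -> Prop) : Prop :=
  (forall w, exists v, R w v) /\ (forall w, exists v, R v w).

Definition sensible_pair (Sigma : fset) (Phi Psi : fset) : Prop :=
  (forall a, Sigma (Next a) -> (Phi (Next a) <-> Psi a)) /\
  (forall a, Sigma (Prev a) -> (Psi (Prev a) <-> Phi a)) /\
  (forall a, Sigma (Glob a) -> (Phi (Glob a) <-> Phi a /\ Psi (Glob a))) /\
  (forall a, Sigma (Hist a) -> (Psi (Hist a) <-> Psi a /\ Phi (Hist a))) /\
  (forall a b, Sigma (Until a b) ->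
     (Phi (Until a b) <-> Phi b \/ (Phi a /\ Psi (Until a b)))) /\
  (forall a b, Sigma (Since a b) ->
     (Psi (Since a b) <-> Psi b \/ (Psi a /\ Phi (Since a b)))).

Definition sensible_rel (Sigma : fset) (W : Type) (lab : W -> fset)
  (R : W -> W -> Prop) : Prop :=
  forall w v, R w v -> sensible_pair Sigma (lab w) (lab v).

Fixpoint rel_pow (W : Type) (R : W -> W -> Prop) (n : nat) : W -> W -> Prop :=
  match n with
  | O => fun x y => x = y
  | S n' => fun x z => exists y, R x y /\ rel_pow R n' y z
  end.

Definition omega_sensible (Sigma : fset) (W : Type) (lab : W -> fset)
  (R : W -> W -> Prop) : Prop :=
  (forall w a, Sigma (Glob a) -> ~ lab w (Glob a) ->
     exists n v, rel_pow R n w v /\ ~ lab v a) /\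
  (forall w a, Sigma (Hist a) -> ~ lab w (Hist a) ->
     exists n v, rel_pow R n v w /\ ~ lab v a) /\
  (forall w a b, lab w (Until a b) ->
     exists n v, rel_pow R n w v /\ lab v b) /\
  (forall w a b, lab w (Since a b) ->
     exists n v, rel_pow R n v w /\ lab v b).

Definition labelled_system (Sigma : fset) (W : Type) (le : W -> W -> Prop)
  (lab : W -> fset) (R : W -> W -> Prop) : Prop :=
  labelled_space Sigma le lab /\ bi_serial R /\ fully_confluent le R /\
  convex_rel le R /\ sensible_rel Sigma lab R.

Definition quasimodel (Sigma : fset) (W : Type) (le : W -> W -> Prop)
  (lab : W -> fset) (R : W -> W -> Prop) : Prop :=
  labelled_system Sigma le lab R /\ omega_sensible Sigma lab R.

Section Quotient.
Variables (W : Type) (le : W -> W -> Prop) (lab : W -> fset) (R : W -> W -> Prop).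

Definition Lset (w : W) : fset -> Prop :=
  fun Phi => exists v, comparable le v w /\ lab v = Phi.

Definition qequiv (w v : W) : Prop := lab w = lab v /\ Lset w = Lset v.

Definition cls (w : W) : W -> Prop := fun v => qequiv w v.

Definition QW : Type := { X : W -> Prop | exists w, X = cls w }.

Definition qle (X Y : QW) : Prop :=
  exists w v, proj1_sig X = cls w /\ proj1_sig Y = cls v /\
    Lset w = Lset v /\ (forall a, lab v a -> lab w a).

Definition qlab (X : QW) : fset :=
  fun a => exists w, proj1_sig X = cls w /\ lab w a.

Definition qR (X Y : QW) : Prop :=
  exists w v, R w v /\ proj1_sig X = cls w /\ proj1_sig Y = cls v.

Definition qRplus (X Y : QW) : Prop :=
  exists X1 X2 Y1 Y2,
    qle X1 X /\ qle X X2 /\ qle Y1 Y /\ qle Y Y2 /\ qR X2 Y1 /\ qR X1 Y2.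

End Quotient.

(* Main.v *)
Require Import Defs.
From Stdlib Require Import FunctionalExtensionality PropExtensionality ProofIrrelevance.

Lemma fset_ext (P Q : fset) : (forall a, P a <-> Q a) -> P = Q.
Proof. intros H; apply functional_extensionality; intro a; apply propositional_extensionality; auto. Qed.

Definition mk {W} (le : W -> W -> Prop) (lab : W -> fset) (w : W) : QW le lab :=
  exist _ (cls le lab w) (ex_intro _ w eq_refl).

Lemma QW_eq {W} {le : W -> W -> Prop} {lab} (X Y : QW le lab) :
  proj1_sig X = proj1_sig Y -> X = Y.
Proof. destruct X as [P HP], Y as [Q HQ]; simpl; intros ->. f_equal; apply proof_irrelevance. Qed.

Lemma QW_rep {W} {le : W -> W -> Prop} {lab} (X : QW le lab) : exists x, X = mk le lab x.
Proof. destruct X as [P [x HP]]. exists x. apply QW_eq. simpl; auto. Qed.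

Lemma mk_eq {W} (le : W -> W -> Prop) lab x y :
  mk le lab x = mk le lab y <-> (lab x = lab y /\ Lset le lab x = Lset le lab y).
Proof.
  split.
  - intros H. assert (Hc : cls le lab x = cls le lab y) by (apply (f_equal (@proj1_sig _ _) H)).
    assert (Hy : cls le lab y y) by (split; reflexivity).
    rewrite <- Hc in Hy. exact Hy.
  - intros [H1 H2]. apply QW_eq. simpl. unfold cls, qequiv. rewrite H1, H2. reflexivity.
Qed.

Lemma qlab_mk {W} (le : W -> W -> Prop) lab x a : qlab (mk le lab x) a <-> lab x a.
Proof.
  split.
  - intros [w [Hw Ha]]. simpl in Hw.
    assert (mk le lab x = mk le lab w) as E by (apply QW_eq; exact Hw).
    apply mk_eq in E. destruct E as [E _]. rewrite E. exact Ha.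
  - intros Ha. exists x. split; auto.
Qed.

Lemma qle_mk {W} (le : W -> W -> Prop) lab x y :
  qle (mk le lab x) (mk le lab y) <-> (Lset le lab x = Lset le lab y /\ forall a, lab y a -> lab x a).
Proof.
  split.
  - intros [w [v [Hw [Hv [HL Hs]]]]]. simpl in Hw, Hv.
    assert (mk le lab x = mk le lab w) as E1 by (apply QW_eq; exact Hw).
    assert (mk le lab y = mk le lab v) as E2 by (apply QW_eq; exact Hv).
    apply mk_eq in E1; apply mk_eq in E2. destruct E1 as [A1 B1], E2 as [A2 B2].
    rewrite A1, A2, B1, B2. auto.
  - intros [HL Hs]. exists x, y. simpl. auto.
Qed.

Lemma qR_mk {W} (le : W -> W -> Prop) lab R x y :
  qR R (mk le lab x) (mk le lab y) <->
  exists x' y', R x' y' /\ mk le lab x = mk le lab x' /\ mk le lab y = mk le lab y'.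
Proof.
  split.
  - intros [w [v [H [Hw Hv]]]]. exists w, v. repeat split; auto; apply QW_eq; auto.
  - intros [w [v [H [Hw Hv]]]]. exists w, v. repeat split; auto.
    + apply (f_equal (@proj1_sig _ _) Hw).
    + apply (f_equal (@proj1_sig _ _) Hv).
Qed.

Definition mono {W} (le : W -> W -> Prop) (lab : W -> fset) :=
  forall w v, le w v -> forall a, lab v a -> lab w a.

Lemma comp_trans {W} (le : W -> W -> Prop) u v w :
  locally_linear le -> comparable le u v -> comparable le v w -> comparable le u w.
Proof.
  intros [_ [E [Er [Es [Et [Ec El]]]]]] H1 H2.
  apply Ec. apply Et with v.
  - destruct H1; [apply El| apply Es, El]; auto.
  - destruct H2; [apply El| apply Es, El]; auto.
Qed.

Lemma comp_sym {W} (le : W -> W -> Prop) u v : comparable le u v -> comparable le v u.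
Proof. unfold comparable; tauto. Qed.

Lemma comp_refl {W} (le : W -> W -> Prop) u : locally_linear le -> comparable le u u.
Proof. intros [[r _] _]. left; apply r. Qed.

Lemma Lset_comp {W} (le : W -> W -> Prop) lab u y :
  locally_linear le -> comparable le u y -> Lset le lab u = Lset le lab y.
Proof.
  intros LL H. apply functional_extensionality; intro P; apply propositional_extensionality.
  unfold Lset; split; intros [v [Hv Hl]]; exists v; split; auto.
  - eapply comp_trans; eauto.
  - eapply comp_trans; eauto. apply comp_sym; auto.
Qed.

Lemma le_qle {W} (le : W -> W -> Prop) lab u v :
  locally_linear le -> mono le lab -> le u v -> qle (mk le lab u) (mk le lab v).
Proof.
  intros LL M H. apply qle_mk. split.
  - apply Lset_comp; auto. left; auto.
  - apply M; auto.
Qed.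

Lemma lift_down {W} (le : W -> W -> Prop) lab x y :
  locally_linear le -> mono le lab -> qle (mk le lab x) (mk le lab y) ->
  exists u, mk le lab x = mk le lab u /\ le u y.
Proof.
  intros LL M H. apply qle_mk in H. destruct H as [HL Hs].
  assert (Hx : Lset le lab x (lab x)) by (exists x; split; auto; apply comp_refl; auto).
  rewrite HL in Hx. destruct Hx as [u [[Hu|Hu] Hl]].
  - exists u. split; auto. apply mk_eq. split; [symmetry; auto|].
    rewrite HL. symmetry. apply Lset_comp; auto. left; auto.
  - exists y. split; [|destruct LL as [[r _] _]; apply r].
    apply mk_eq. split; auto.
    apply fset_ext. intro a. split; auto. intro Ha. rewrite <- Hl in Ha. apply (M y u Hu a Ha).
Qed.

Lemma lift_up {W} (le : W -> W -> Prop) lab x y :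
  locally_linear le -> mono le lab -> qle (mk le lab x) (mk le lab y) ->
  exists u, mk le lab y = mk le lab u /\ le x u.
Proof.
  intros LL M H. apply qle_mk in H. destruct H as [HL Hs].
  assert (Hy : Lset le lab y (lab y)) by (exists y; split; auto; apply comp_refl; auto).
  rewrite <- HL in Hy. destruct Hy as [u [[Hu|Hu] Hl]].
  - exists x. split; [|destruct LL as [[r _] _]; apply r].
    apply mk_eq. split; auto.
    apply fset_ext. intro a. split; auto. intro Ha. rewrite <- Hl. apply (M u x Hu a Ha).
  - exists u. split; auto. apply mk_eq. split; [symmetry; auto|].
    rewrite <- HL. apply Lset_comp; auto. left; auto.
Qed.

Lemma qle_refl {W} (le : W -> W -> Prop) lab (X : QW le lab) : qle X X.
Proof. destruct (QW_rep X) as [x ->]. apply qle_mk. auto. Qed.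

Lemma qle_trans {W} (le : W -> W -> Prop) lab (X Y Z : QW le lab) : qle X Y -> qle Y Z -> qle X Z.
Proof.
  destruct (QW_rep X) as [x ->], (QW_rep Y) as [y ->], (QW_rep Z) as [z ->].
  rewrite !qle_mk. intros [A B] [C D]. split; [congruence|auto].
Qed.

Lemma qcomp_down {W} {le : W -> W -> Prop} {lab} (X Y Z : QW le lab) :
  locally_linear le -> mono le lab -> qle X Z -> qle Y Z -> qle X Y \/ qle Y X.
Proof.
  intros LL M.
  destruct (QW_rep X) as [x ->], (QW_rep Y) as [y ->], (QW_rep Z) as [z ->].
  intros H1 H2. apply lift_down in H1; auto. apply lift_down in H2; auto.
  destruct H1 as [u [-> Hu]], H2 as [v [-> Hv]].
  assert (comparable le u v) as [C|C].
  { apply comp_trans with z; [auto| left; auto| right; auto]. }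
  - left; apply le_qle; auto.
  - right; apply le_qle; auto.
Qed.

Lemma qcomp_up {W} {le : W -> W -> Prop} {lab} (X Y Z : QW le lab) :
  locally_linear le -> mono le lab -> qle Z X -> qle Z Y -> qle X Y \/ qle Y X.
Proof.
  intros LL M.
  destruct (QW_rep X) as [x ->], (QW_rep Y) as [y ->], (QW_rep Z) as [z ->].
  intros H1 H2. apply lift_up in H1; auto. apply lift_up in H2; auto.
  destruct H1 as [u [-> Hu]], H2 as [v [-> Hv]].
  assert (comparable le u v) as [C|C].
  { apply comp_trans with z; [auto| right; auto| left; auto]. }
  - left; apply le_qle; auto.
  - right; apply le_qle; auto.
Qed.

Lemma R_qR {W} (le : W -> W -> Prop) lab (R : W -> W -> Prop) x y :
  R x y -> qR R (mk le lab x) (mk le lab y).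
Proof. intros H. apply qR_mk. exists x, y. auto. Qed.

Lemma R_qRplus {W} (le : W -> W -> Prop) lab (R : W -> W -> Prop) x y :
  R x y -> qRplus R (mk le lab x) (mk le lab y).
Proof.
  intros H. exists (mk le lab x), (mk le lab x), (mk le lab y), (mk le lab y).
  repeat split; try apply qle_refl; apply R_qR; auto.
Qed.

Lemma qR_flip {W} (le : W -> W -> Prop) lab (R : W -> W -> Prop) (X Y : QW le lab) :
  qR (fun a b => R b a) X Y -> qR R Y X.
Proof. intros [w [v [H [H1 H2]]]]. exists v, w. auto. Qed.

Lemma qRplus_flip {W} (le : W -> W -> Prop) lab (R : W -> W -> Prop) (X Y : QW le lab) :
  qRplus (fun a b => R b a) X Y -> qRplus R Y X.
Proof.
  intros [X1 [X2 [Y1 [Y2 [A [B [C [D [E F]]]]]]]]].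
  exists Y1, Y2, X1, X2. repeat split; auto; apply qR_flip; auto.
Qed.

Lemma qRplus_flip' {W} (le : W -> W -> Prop) lab (R : W -> W -> Prop) (X Y : QW le lab) :
  qRplus R Y X -> qRplus (fun a b => R b a) X Y.
Proof.
  intros [X1 [X2 [Y1 [Y2 [A [B [C [D [E F]]]]]]]]].
  exists Y1, Y2, X1, X2. repeat split; auto; apply qR_flip; auto.
Qed.

Definition fdown {W} (le R : W -> W -> Prop) :=
  forall x x' y', le x x' -> R x' y' -> exists y, R x y /\ le y y'.
Definition fup {W} (le R : W -> W -> Prop) :=
  forall x x' y, le x x' -> R x y -> exists y', R x' y' /\ le y y'.

Lemma q_fdown {W} (le : W -> W -> Prop) lab (R : W -> W -> Prop) :
  locally_linear le -> mono le lab -> fdown le R ->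
  forall X X' Y' : QW le lab, qle X X' -> qRplus R X' Y' -> exists Y, qRplus R X Y /\ qle Y Y'.
Proof.
  intros LL M FD X X' Y' HX [X1 [X2 [Y1 [Y2 [A [B [C [D [E F]]]]]]]]].
  destruct (qcomp_down X1 X X' LL M A HX) as [G|G].
  - exists Y'. split; [|apply qle_refl].
    exists X1, X2, Y1, Y2. repeat split; auto. eapply qle_trans; eauto.
  - destruct (QW_rep X1) as [a ->], (QW_rep Y2) as [b ->], (QW_rep X) as [x ->].
    apply qR_mk in F. destruct F as [a' [b' [Rab [Ea Eb]]]].
    rewrite Ea in G. rewrite Eb in D.
    destruct (lift_down _ _ _ _ LL M G) as [u [Eu Hu]].
    destruct (FD _ _ _ Hu Rab) as [c [Ruc Hc]].
    assert (Hcq : qle (mk le lab c) (mk le lab b')) by (apply le_qle; auto).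
    destruct (qcomp_down Y' (mk le lab c) (mk le lab b') LL M D Hcq) as [K|K].
    + exists Y'. split; [|apply qle_refl].
      exists (mk le lab x), X2, Y1, (mk le lab c). repeat split; auto.
      * apply qle_refl.
      * apply qle_trans with X'; auto.
      * rewrite Eu. apply R_qR; auto.
    + exists (mk le lab c). split; auto.
      rewrite Eu. apply R_qRplus; auto.
Qed.

Lemma q_fup {W} (le : W -> W -> Prop) lab (R : W -> W -> Prop) :
  locally_linear le -> mono le lab -> fup le R ->
  forall X X' Y : QW le lab, qle X X' -> qRplus R X Y -> exists Y', qRplus R X' Y' /\ qle Y Y'.
Proof.
  intros LL M FU X X' Y HX [X1 [X2 [Y1 [Y2 [A [B [C [D [E F]]]]]]]]].
  destruct (qcomp_up X' X2 X LL M HX B) as [G|G].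
  - exists Y. split; [|apply qle_refl].
    exists X1, X2, Y1, Y2. repeat split; auto. eapply qle_trans; eauto.
  - destruct (QW_rep X2) as [a ->], (QW_rep Y1) as [b ->], (QW_rep X') as [x ->].
    apply qR_mk in E. destruct E as [a' [b' [Rab [Ea Eb]]]].
    rewrite Ea in G. rewrite Eb in C.
    destruct (lift_up _ _ _ _ LL M G) as [u [Eu Hu]].
    destruct (FU _ _ _ Hu Rab) as [d [Rud Hd]].
    assert (Hdq : qle (mk le lab b') (mk le lab d)) by (apply le_qle; auto).
    destruct (qcomp_up Y (mk le lab d) (mk le lab b') LL M C Hdq) as [K|K].
    + exists (mk le lab d). split; auto.
      rewrite Eu. apply R_qRplus; auto.
    + exists Y. split; [|apply qle_refl].
      exists X1, (mk le lab x), (mk le lab d), Y2. repeat split; auto.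
      * apply qle_trans with X; auto.
      * apply qle_refl.
      * rewrite Eu. apply R_qR; auto.
Qed.

Lemma q_convex {W} (le : W -> W -> Prop) lab (R : W -> W -> Prop) :
  convex_rel (@qle W le lab) (qRplus R).
Proof.
  split; intros X Y V Z HY HZ H1 H2.
  - destruct HY as [X1 [X2 [Y1 [Y2 [A [B [C [D [E F]]]]]]]]].
    destruct HZ as [X1' [X2' [Z1 [Z2 [A' [B' [C' [D' [E' F']]]]]]]]].
    exists X1', X2, Y1, Z2. repeat split; auto; eapply qle_trans; eauto; eapply qle_trans; eauto.
  - destruct HY as [Y1 [Y2 [X1 [X2 [A [B [C [D [E F]]]]]]]]].
    destruct HZ as [Z1 [Z2 [X1' [X2' [A' [B' [C' [D' [E' F']]]]]]]]].
    exists Y1, Z2, X1', X2. repeat split; auto; eapply qle_trans; eauto; eapply qle_trans; eauto.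
Qed.

Lemma sens_combine Sigma (P Q C F C' F' : fset) :
  sensible_pair Sigma P C -> sensible_pair Sigma P F ->
  (forall a, Q a -> C a) -> (forall a, F a -> Q a) ->
  sensible_pair Sigma C' Q -> sensible_pair Sigma F' Q ->
  (forall a, P a -> C' a) -> (forall a, F' a -> P a) ->
  (forall a, P (Glob a) -> P a) -> (forall a, Q (Hist a) -> Q a) ->
  sensible_pair Sigma P Q.
Proof.
  intros [N1 [Y1 [G1 [H1 [U1 S1]]]]] [N2 [Y2 [G2 [H2 [U2 S2]]]]] QC FQ
         [N3 [Y3 [G3 [H3 [U3 S3]]]]] [N4 [Y4 [G4 [H4 [U4 S4]]]]] PC FP GP HQ.
  split; [|split; [|split; [|split; [|split]]]].
  5-6: intros a b H. 1-4: intros a H. all: split.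
  - intros K. apply FQ. apply (N2 a H); auto.
  - intros K. apply (N1 a H). auto.
  - intros K. apply QC in K. apply (Y1 a H) in K. auto.
  - intros K. apply FQ. apply (Y2 a H). auto.
  - intros K. split; auto. apply FQ. apply (G2 a H) in K. tauto.
  - intros [K1 K2]. apply (G1 a H). auto.
  - intros K. split; auto. apply FP. apply (H4 a H) in K. tauto.
  - intros [K1 K2]. apply (H3 a H). auto.
  - intros K. apply (U2 a b H) in K. destruct K as [K|[K1 K2]]; auto.
  - intros [K|[K1 K2]]; apply (U1 a b H); auto.
  - intros K. apply (S4 a b H) in K. destruct K as [K|[K1 K2]]; auto.
  - intros [K|[K1 K2]]; apply (S3 a b H); auto.
Qed.

Lemma qlab_mk_eq {W} (le : W -> W -> Prop) lab x : qlab (mk le lab x) = lab x.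
Proof. apply fset_ext. intro a. apply qlab_mk. Qed.

Lemma qle_lab {W} {le : W -> W -> Prop} {lab} (X Y : QW le lab) a :
  qle X Y -> qlab Y a -> qlab X a.
Proof.
  destruct (QW_rep X) as [x ->], (QW_rep Y) as [y ->].
  rewrite qle_mk, !qlab_mk. intros [_ H]; auto.
Qed.

Lemma lift_fwd {W} (le : W -> W -> Prop) lab (R : W -> W -> Prop) :
  locally_linear le -> mono le lab -> fdown le R -> fup le R ->
  forall X Y : QW le lab, qRplus R X Y ->
  exists u c u' f, X = mk le lab u /\ R u c /\ (forall a, qlab Y a -> lab c a) /\
     X = mk le lab u' /\ R u' f /\ (forall a, lab f a -> qlab Y a).
Proof.
  intros LL M FD FU X Y [X1 [X2 [Y1 [Y2 [A [B [C [D [E F]]]]]]]]].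
  destruct (QW_rep X) as [x ->].
  destruct (QW_rep X2) as [a0 ->], (QW_rep Y1) as [b0 ->].
  destruct (QW_rep X1) as [d0 ->], (QW_rep Y2) as [e0 ->].
  apply qR_mk in E. destruct E as [a [b [Rab [Ea Eb]]]].
  apply qR_mk in F. destruct F as [d [e [Rde [Ed Ee]]]].
  rewrite Ea in B. rewrite Eb in C. rewrite Ed in A. rewrite Ee in D.
  destruct (lift_down _ _ _ _ LL M B) as [u [Eu Hu]].
  destruct (FD _ _ _ Hu Rab) as [c [Ruc Hc]].
  destruct (lift_up _ _ _ _ LL M A) as [u' [Eu' Hu']].
  destruct (FU _ _ _ Hu' Rde) as [f [Ruf Hf]].
  exists u, c, u', f. repeat split; auto.
  - intros a1 Ha. apply (qle_lab _ _ a1 C) in Ha. rewrite qlab_mk in Ha. apply (M c b Hc a1 Ha).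
  - intros a1 Ha. apply (qle_lab _ _ a1 D). rewrite qlab_mk. apply (M e f Hf a1 Ha).
Qed.

Lemma lift_bwd {W} (le : W -> W -> Prop) lab (R : W -> W -> Prop) :
  locally_linear le -> mono le lab -> fully_confluent le R ->
  forall X Y : QW le lab, qRplus R X Y ->
  exists v c v' f, Y = mk le lab v /\ R c v /\ (forall a, qlab X a -> lab c a) /\ Y = mk le lab v' /\ R f v' /\ (forall a, lab f a -> qlab X a).
Proof.
  intros LL M [_ [_ [BD BU]]] X Y H.
  apply qRplus_flip' in H.
  apply (lift_fwd le lab (fun a b => R b a) LL M) in H.
  - exact H.
  - intros x x' y' Hx Hr. destruct (BD _ _ _ Hr Hx) as [y [A B]]. exists y. auto.
  - intros x x' y Hx Hr. destruct (BU _ _ _ Hr Hx) as [y' [A B]]. exists y'. auto.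
Qed.

Lemma relpow_lift {W} (le : W -> W -> Prop) lab (R : W -> W -> Prop) n :
  forall x v, rel_pow R n x v -> rel_pow (qRplus R) n (mk le lab x) (mk le lab v).
Proof.
  induction n as [|n IH]; simpl; intros x v H.
  - subst; reflexivity.
  - destruct H as [y [H1 H2]]. exists (mk le lab y). split; [apply R_qRplus; auto | apply IH; auto].
Qed.

Theorem lemma6p3 (Sigma : fset) (W : Type) (le : W -> W -> Prop)
  (lab : W -> fset) (R : W -> W -> Prop) :
  subformula_closed Sigma ->
  labelled_system Sigma le lab R ->
  omega_sensible Sigma lab R ->
  omega_sensible Sigma (@qlab W le lab) (@qRplus W le lab R) /\
  quasimodel Sigma (@qle W le lab) (@qlab W le lab) (@qRplus W le lab R).
Proof.
  intros _ [[LL [Ty [Mo [Im Co]]]] [[Ser Pre] [FC [Cv Sen]]]] [OG [OH [OU OS]]].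
  pose proof FC as FC'. destruct FC' as [FD [FU [BD BU]]].
  assert (M : mono le lab) by exact Mo.
  assert (OSQ : omega_sensible Sigma (@qlab W le lab) (@qRplus W le lab R)).
  { split; [|split; [|split]].
    - intros X a HS HX. destruct (QW_rep X) as [x ->]. rewrite qlab_mk in HX.
      destruct (OG x a HS HX) as [n [v [Hp Hv]]]. exists n, (mk le lab v).
      split; [apply relpow_lift; auto | rewrite qlab_mk; auto].
    - intros X a HS HX. destruct (QW_rep X) as [x ->]. rewrite qlab_mk in HX.
      destruct (OH x a HS HX) as [n [v [Hp Hv]]]. exists n, (mk le lab v).
      split; [apply relpow_lift; auto | rewrite qlab_mk; auto].
    - intros X a b HX. destruct (QW_rep X) as [x ->]. rewrite qlab_mk in HX.
      destruct (OU x a b HX) as [n [v [Hp Hv]]]. exists n, (mk le lab v).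
      split; [apply relpow_lift; auto | rewrite qlab_mk; auto].
    - intros X a b HX. destruct (QW_rep X) as [x ->]. rewrite qlab_mk in HX.
      destruct (OS x a b HX) as [n [v [Hp Hv]]]. exists n, (mk le lab v).
      split; [apply relpow_lift; auto | rewrite qlab_mk; auto]. }
  split; [exact OSQ|]. split; [|exact OSQ].
  assert (GP : forall w a, lab w (Glob a) -> lab w a).
  { intros w a H. destruct (Ser w) as [v Hv]. pose proof (Sen _ _ Hv) as [_ [_ [G _]]].
    destruct (Ty w) as [TS _]. apply (G a (TS _ H)) in H. tauto. }
  assert (HQ : forall w a, lab w (Hist a) -> lab w a).
  { intros w a H. destruct (Pre w) as [v Hv]. pose proof (Sen _ _ Hv) as [_ [_ [_ [Hh _]]]].
    destruct (Ty w) as [TS _]. apply (Hh a (TS _ H)) in H. tauto. }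
  assert (FDf : fdown le (fun a b => R b a)).
  { intros x x' y' Hx Hr. destruct (BD _ _ _ Hr Hx) as [y [A B]]. exists y. auto. }
  assert (FUf : fup le (fun a b => R b a)).
  { intros x x' y Hx Hr. destruct (BU _ _ _ Hr Hx) as [y' [A B]]. exists y'. auto. }
  split; [|split; [|split; [|split]]].
  -
    split; [|split; [|split; [|split]]].
    + split.
      * split; [|split].
        -- apply qle_refl.
        -- intros X Y. destruct (QW_rep X) as [x ->], (QW_rep Y) as [y ->].
           rewrite !qle_mk. intros [A B] [C D]. apply mk_eq. split; auto.
           apply fset_ext; intro a; split; auto.
        -- intros X Y Z; apply qle_trans.
      * exists (fun X Y => exists x y, X = mk le lab x /\ Y = mk le lab y /\ Lset le lab x = Lset le lab y).
        split; [|split; [|split; [|split]]].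
        -- intros X. destruct (QW_rep X) as [x ->]. exists x, x. auto.
        -- intros X Y [x [y [A [B C]]]]. exists y, x. auto.
        -- intros X Y Z [x [y [A [B C]]]] [y' [z [A' [B' C']]]]. exists x, z.
           repeat split; auto. rewrite B in A'. apply mk_eq in A'. destruct A' as [_ A'].
           congruence.
        -- intros X Y [x [y [-> [-> C]]]].
           assert (Hx : Lset le lab x (lab x)).
           { exists x. split; auto. apply comp_refl; auto. }
           rewrite C in Hx. destruct Hx as [u [[Hu|Hu] Hl]].
           ++ left. apply qle_mk. split; auto. intros a Ha. rewrite <- Hl. apply (M u y Hu a Ha).
           ++ right. apply qle_mk. split; auto. intros a Ha. rewrite <- Hl in Ha. apply (M y u Hu a Ha).
        -- intros X Y. destruct (QW_rep X) as [x ->], (QW_rep Y) as [y ->].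
           rewrite qle_mk. intros [A _]. exists x, y. auto.
    + intros X. destruct (QW_rep X) as [x ->]. rewrite qlab_mk_eq. apply Ty.
    + intros X Y H a. apply qle_lab; auto.
    + intros X a b HS HX. destruct (QW_rep X) as [x ->]. rewrite qlab_mk in HX.
      destruct (Im x a b HS HX) as [v [A [B C]]]. exists (mk le lab v).
      rewrite !qlab_mk. split; auto. apply le_qle; auto.
    + intros X a b HX. destruct (QW_rep X) as [x ->]. rewrite qlab_mk in HX.
      destruct (Co x a b HX) as [v [A [B C]]]. exists (mk le lab v).
      rewrite !qlab_mk. split; auto. apply le_qle; auto.
  - split.
    + intros X. destruct (QW_rep X) as [x ->]. destruct (Ser x) as [v Hv].
      exists (mk le lab v). apply R_qRplus; auto.
    + intros X. destruct (QW_rep X) as [x ->]. destruct (Pre x) as [v Hv].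
      exists (mk le lab v). apply R_qRplus; auto.
  - split; [|split; [|split]].
    + intros X X' Y' H1 H2. apply (q_fdown le lab R LL M FD X X' Y' H1 H2).
    + intros X X' Y H1 H2. apply (q_fup le lab R LL M FU X X' Y H1 H2).
    + intros X' Y' Y H1 H2. apply qRplus_flip' in H1.
      destruct (q_fdown le lab _ LL M FDf Y Y' X' H2 H1) as [X [A B]].
      exists X. split; auto. apply qRplus_flip; auto.
    + intros X Y Y' H1 H2. apply qRplus_flip' in H1.
      destruct (q_fup le lab _ LL M FUf Y Y' X H2 H1) as [X' [A B]].
      exists X'. split; auto. apply qRplus_flip; auto.
  - apply q_convex.
  - intros X Y H.
    destruct (lift_fwd le lab R LL M FD FU X Y H) as [u [c [u' [f [Eu [Ruc [Hc [Eu' [Ruf Hf]]]]]]]]].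
    destruct (lift_bwd le lab R LL M FC X Y H) as [v [c' [v' [f' [Ev [Rcv [Hc' [Ev' [Rfv Hf']]]]]]]]].
    assert (Luu : lab u' = lab u).
    { rewrite Eu in Eu'. apply mk_eq in Eu'. destruct Eu' as [E _]. symmetry; exact E. }
    assert (Lvv : lab v' = lab v).
    { rewrite Ev in Ev'. apply mk_eq in Ev'. destruct Ev' as [E _]. symmetry; exact E. }
    rewrite Eu, Ev in *. rewrite !qlab_mk_eq in *.
    apply (sens_combine Sigma (lab u) (lab v) (lab c) (lab f) (lab c') (lab f')); auto.
    + rewrite <- Luu. apply Sen; auto.
    + rewrite <- Lvv. apply Sen; auto.
Qed.
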